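(* Let $G=\mathbb{R}^6$ with coordinates $(y_1,y_2,z_1,z_2,v_1,v_2)$ and multiplication $(y',z',v')\cdot(y,z,v)=\big(y_1+y_1',y_2+y_2',z_1+z_1',z_2+z_2',\ v_1+v_1'+(y_1'-y_2')z_1-(y_1'+2y_2')z_2,\ v_2+v_2'-(2y_1'+y_2')z_1+(y_2'-y_1')z_2\big)$, and let $\Gamma=\{(y_1,y_2,z_1,z_2,v_1,v_2)\in\mathbb{Z}^6: v_1\equiv v_2\pmod 3\}$ and $N=\Gamma\backslash G$. Let $H_{\mathbb{C}}$ be the complex Heisenberg group of complex matrices $\begin{pmatrix}1&u_2&u_3\\0&1&u_1\\0&0&1\end{pmatrix}$, let $\Lambda=\mathbb{Z}\langle1,\zeta\rangle\subset\mathbb{C}$ with $\zeta=e^{2\pi i/3}$, and let $\Gamma_H\subset H_{\mathbb{C}}$ be the subgroup of matrices with $u_1,u_2,u_3\in\Lambda$. Then there is an isomorphism of Lie groups $G\to H_{\mathbb{C}}$ carrying $\Gamma$ onto $\Gamma_H$; in particular $N$ is diffeomorphic to $\Gamma_H\backslash H_{\mathbb{C}}$.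
   Context: $\Gamma$ is a discrete subgroup of $G$ and the quotient is by left multiplication. *)

(* Defs.v *)
From mathcomp Require Import all_boot all_order all_algebra.
From mathcomp Require Import all_classical all_reals all_analysis.
From mathcomp Require Import complex.
Import GRing.Theory Num.Theory ComplexField numFieldNormedType.Exports.
Local Open Scope ring_scope.

Section Defs.
Variable R : realType.

Fixpoint Ck (k : nat) (f : 'rV[R]_6 -> R) : Prop :=
  match k with
  | 0 => continuous f
  | k'.+1 => continuous f /\
      forall i : 'I_6, (forall x, derivable f x (delta_mx 0 i)) /\
                       Ck k' (fun x => 'D_(delta_mx 0 i) f x)
  end.

Definition smooth_fun (f : 'rV[R]_6 -> R) : Prop :=
  forall k, Ck k f.

Definition smooth_map (f : 'rV[R]_6 -> 'rV[R]_6) : Prop :=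
  forall j : 'I_6, smooth_fun (fun x => f x 0 j).

Definition Gmk (y1 y2 z1 z2 v1 v2 : R) : 'rV[R]_6 :=
  \row_(k < 6) [:: y1; y2; z1; z2; v1; v2]`_k.

Definition G_mul (g' g : 'rV[R]_6) : 'rV[R]_6 :=
  let y1' := g' 0 0 in let y2' := g' 0 1 in let z1' := g' 0 2 in
  let z2' := g' 0 3 in let v1' := g' 0 4 in let v2' := g' 0 5 in
  let y1 := g 0 0 in let y2 := g 0 1 in let z1 := g 0 2 in
  let z2 := g 0 3 in let v1 := g 0 4 in let v2 := g 0 5 in
  Gmk (y1 + y1') (y2 + y2') (z1 + z1') (z2 + z2')
      (v1 + v1' + (y1' - y2') * z1 - (y1' + 2 * y2') * z2)
      (v2 + v2' - (2 * y1' + y2') * z1 + (y2' - y1') * z2).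

Definition Gamma : set 'rV[R]_6 :=
  [set g | exists n : int ^ 6,
      (forall k : 'I_6, g 0 k = (n k)%:~R) /\ (3 %| n (inord 4) - n (inord 5))%Z].

Definition HC : set 'M[R[i]]_3 :=
  [set M | forall i j : 'I_3,
      ((i == j) -> M i j = 1) /\ ((j < i)%N -> M i j = 0)].

Definition Hu1 (M : 'M[R[i]]_3) := M 1 2.
Definition Hu2 (M : 'M[R[i]]_3) := M 0 1.
Definition Hu3 (M : 'M[R[i]]_3) := M 0 2.

Definition Hcoord (M : 'M[R[i]]_3) : 'rV[R]_6 :=
  Gmk (complex.Re (Hu1 M)) (complex.Im (Hu1 M)) (complex.Re (Hu2 M)) (complex.Im (Hu2 M))
      (complex.Re (Hu3 M)) (complex.Im (Hu3 M)).

Definition Hmat (w : 'rV[R]_6) : 'M[R[i]]_3 :=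
  let u1 := Complex (w 0 0) (w 0 1) in
  let u2 := Complex (w 0 2) (w 0 3) in
  let u3 := Complex (w 0 4) (w 0 5) in
  \matrix_(i < 3, j < 3)
    nth 0 (nth [::] [:: [:: 1; u2; u3]; [:: 0; 1; u1]; [:: 0; 0; 1]] i) j.

(* zeta = exp(2 pi i/3) = -1/2 + i sqrt(3)/2 and Lambda = Z<1, zeta> *)
Definition zeta : R[i] := Complex (- (1 / 2)) (Num.sqrt 3 / 2).

Definition Lambda : set R[i] :=
  [set u | exists a b : int, u = a%:~R + b%:~R * zeta].

Definition GammaH : set 'M[R[i]]_3 :=
  [set M | HC M /\ Lambda (Hu1 M) /\ Lambda (Hu2 M) /\ Lambda (Hu3 M)].

End Defs.

Arguments Ck {R}.
Arguments smooth_fun {R}.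
Arguments smooth_map {R}.
Arguments Gmk {R}.
Arguments G_mul {R}.
Arguments Gamma {R}.
Arguments HC {R}.
Arguments Hu1 {R}.
Arguments Hu2 {R}.
Arguments Hu3 {R}.
Arguments Hcoord {R}.
Arguments Hmat {R}.
Arguments zeta {R}.
Arguments Lambda {R}.
Arguments GammaH {R}.

(* Main.v *)
Require Import Defs.
From mathcomp Require Import all_boot all_order all_algebra.
From mathcomp Require Import all_classical all_reals all_analysis.
From mathcomp Require Import complex.
From mathcomp Require Import ring lra.
Import GRing.Theory Num.Theory ComplexField numFieldNormedType.Exports.
Local Open Scope ring_scope.

Section Helpers.
Variable R : realType.
Inductive lin : ('rV[R]_6 -> R) -> Prop :=
| lin_cst c : lin (fun _ => c)
| lin_proj j : lin (fun x => x 0 j)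
| lin_add f g : lin f -> lin g -> lin (fun x => f x + g x)
| lin_scale c f : lin f -> lin (fun x => c * f x).

Lemma lin_props f : lin f -> continuous f /\
  forall v : 'rV[R]_6, (forall x, derivable f x v) /\ exists c, forall x, 'D_v f x = c.
Proof.
elim=> {f}.
- move=> c; split; first exact: cst_continuous.
  move=> v; split=> [x|]; first exact: derivable_cst.
  by exists 0 => x; rewrite derive_cst.
- move=> j; split; first exact: coord_continuous.
  move=> v; split=> [x|].
    by move: (@derivable_id _ _ x v) => /derivable_mxP; apply.
  exists (v 0 j) => x.
  have := @derive_mx R _ 1 6 id x v (@derivable_id _ _ x v).
  have hd : 'D_v (@id 'rV[R]_6) x = v by apply: derive_val.
  move=> H; have H2 := congr1 (fun M : 'rV[R]_6 => M 0 j) H.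
  rewrite /= in H2. rewrite hd mxE in H2. symmetry; exact H2.
- move=> f g _ [cf hf] _ [cg hg]; split.
    by move=> x; apply: (cvgD (cf x) (cg x)).
  move=> v; have [df [a ha]] := hf v; have [dg [b hb]] := hg v.
  split=> [x|]; first exact: derivableD.
  by exists (a + b) => x; rewrite (deriveD (df x) (dg x)) ha hb.
- move=> c f _ [cf hf]; split.
    by move=> x; apply: (cvgM (cvg_cst c) (cf x)).
  move=> v; have [df [a ha]] := hf v.
  split=> [x|]; first exact: derivableZ.
  by exists (c * a) => x; rewrite (deriveZ c (df x)) ha.
Qed.

Lemma lin_Ck k f : lin f -> Ck k f.
Proof.
elim: k f => [|k IH] f lf /=; have [cf hf] := @lin_props f lf; first exact: cf.
split=> // i; have [df [c hc]] := hf (delta_mx 0 i); split=> //.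
have -> : (fun x => 'D_(delta_mx 0 i) f x) = (fun _ => c) by apply: funext.
by apply: IH; constructor.
Qed.

Lemma lin_ext f g : (forall x, f x = g x) -> lin f -> lin g.
Proof. by move=> e; have -> : g = f by apply: funext => x; rewrite e. Qed.

Lemma lin_opp f : lin f -> lin (fun x => - f x).
Proof. by move=> h; apply: (@lin_ext (fun x => -1 * f x)) => [x|]; [rewrite mulN1r|constructor]. Qed.

Lemma lin_sub f g : lin f -> lin g -> lin (fun x => f x - g x).
Proof. by move=> hf hg; constructor => //; apply: lin_opp. Qed.

Lemma lin_mulr c f : lin f -> lin (fun x => f x * c).
Proof. by move=> h; apply: (@lin_ext (fun x => c * f x)) => [x|]; [rewrite mulrC|constructor]. Qed.

Ltac solve_lin := repeat first [ apply: lin_proj | apply: lin_add | apply: lin_sub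
  | apply: lin_opp | apply: lin_scale | apply: lin_mulr | apply: lin_cst ].

Lemma ord6_cases (P : 'I_6 -> Prop) : P 0 -> P 1 -> P 2 -> P 3 -> P 4 -> P 5 ->
  forall k, P k.
Proof.
move=> p0 p1 p2 p3 p4 p5 [[|[|[|[|[|[|k]]]]]] hk] //.
- by rewrite (_ : Ordinal hk = 0) //; apply: val_inj.
- by rewrite (_ : Ordinal hk = 1) //; apply: val_inj.
- by rewrite (_ : Ordinal hk = 2) //; apply: val_inj.
- by rewrite (_ : Ordinal hk = 3) //; apply: val_inj.
- by rewrite (_ : Ordinal hk = 4) //; apply: val_inj.
- by rewrite (_ : Ordinal hk = 5) //; apply: val_inj.
Qed.

Lemma ord3_cases (P : 'I_3 -> Prop) : P 0 -> P 1 -> P 2 -> forall k, P k.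
Proof.
move=> p0 p1 p2 [[|[|[|k]]] hk] //.
- by rewrite (_ : Ordinal hk = 0) //; apply: val_inj.
- by rewrite (_ : Ordinal hk = 1) //; apply: val_inj.
- by rewrite (_ : Ordinal hk = 2) //; apply: val_inj.
Qed.

Lemma lin_Gmk a0 a1 a2 a3 a4 a5 : lin a0 -> lin a1 -> lin a2 -> lin a3 -> lin a4 -> lin a5 ->
  forall j, lin (fun x => Gmk (a0 x) (a1 x) (a2 x) (a3 x) (a4 x) (a5 x) 0 j).
Proof.
move=> h0 h1 h2 h3 h4 h5; apply: ord6_cases;
  apply: lin_ext; try (by move=> x; rewrite /Gmk mxE /=); assumption.
Qed.

Lemma smooth_of (f : 'rV[R]_6 -> 'rV[R]_6) : (forall j, lin (fun x => f x 0 j)) -> smooth_map f.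
Proof. by move=> h j k; apply: lin_Ck. Qed.

Lemma cplx_mul (a b c d : R) : Complex a b * Complex c d = Complex (a*c - b*d) (a*d + b*c).
Proof. reflexivity. Qed.
Lemma cplx_add (a b c d : R) : Complex a b + Complex c d = Complex (a+c) (b+d).
Proof. reflexivity. Qed.
Lemma cint (z : int) : (z%:~R : R[i]) = Complex (z%:~R) 0.
Proof. by rewrite -[RHS]/(real_complex R (z%:~R : R)) rmorph_int. Qed.
Lemma inord4 : (inord 4 : 'I_6) = 4.
Proof. by apply/val_inj; rewrite /= inordK. Qed.
Lemma inord5 : (inord 5 : 'I_6) = 5.
Proof. by apply/val_inj; rewrite /= inordK. Qed.

Definition s : R := Num.sqrt 3.
Lemma s_neq0 : s != 0.
Proof. by rewrite /s sqrtr_eq0; apply/negP => h; lra. Qed.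
Lemma ss : s * s = 3.
Proof. by rewrite /s -expr2 sqr_sqrtr. Qed.
Lemma ss2 x y : (x * s / 2) * (y * s / 2) = x * y * 3 / 4.
Proof. by rewrite -ss; field. Qed.

Definition F (g : 'rV[R]_6) : 'rV[R]_6 :=
  Gmk ((- g 0 2 - g 0 3) - (- g 0 3) / 2) ((- g 0 3) * s / 2)
      ((g 0 0 + g 0 1) - g 0 1 / 2) (g 0 1 * s / 2)
      ((g 0 4 + 2 * g 0 5) / 3 - (2 * g 0 4 + g 0 5) / 3 / 2)
      ((2 * g 0 4 + g 0 5) / 3 * s / 2).

Definition Finv (w : 'rV[R]_6) : 'rV[R]_6 :=
  let q1 := 2 * w 0 1 / s in let p1 := w 0 0 + w 0 1 / s in
  let q2 := 2 * w 0 3 / s in let p2 := w 0 2 + w 0 3 / s in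
  let q3 := 2 * w 0 5 / s in let p3 := w 0 4 + w 0 5 / s in
  Gmk (p2 - q2) q2 (- p1 + q1) (- q1) (2 * q3 - p3) (2 * p3 - q3).


Lemma HcoordK (w : 'rV[R]_6) : Hcoord (Hmat w) = w.
Proof.
apply/rowP; apply: ord6_cases;
  by rewrite /Hcoord /Hmat /Hu1 /Hu2 /Hu3 /Gmk !mxE /=.
Qed.

Lemma HC_Hmat (w : 'rV[R]_6) : HC (Hmat w).
Proof.
move=> i j; move: i j; apply: ord3_cases; apply: ord3_cases;
  by split => //; rewrite /Hmat mxE.
Qed.

Lemma HmatK (M : 'M[R[i]]_3) : HC M -> Hmat (Hcoord M) = M.
Proof.
move=> HM; apply/matrixP => i j; move: i j; apply: ord3_cases; apply: ord3_cases;
  rewrite /Hmat /Hcoord /Hu1 /Hu2 /Hu3 /Gmk !mxE /=;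
  match goal with |- context [fun_of_matrix M ?a ?b] => case: (HM a b) => h1 h2;
    first [ by rewrite h1 | by rewrite h2 | by case: (M a b) ] end.
Qed.


Lemma FinvF (g : 'rV[R]_6) : Finv (F g) = g.
Proof.
have hs := s_neq0.
apply/rowP; apply: ord6_cases; rewrite /Finv /F /Gmk !mxE /=; by field.
Qed.

Lemma FFinv (w : 'rV[R]_6) : F (Finv w) = w.
Proof.
have hs := s_neq0.
apply/rowP; apply: ord6_cases; rewrite /Finv /F /Gmk !mxE /=; by field.
Qed.

Definition HM (u1 u2 u3 : R[i]) : 'M[R[i]]_3 :=  \matrix_(i < 3, j < 3)
    nth 0 (nth [::] [:: [:: 1; u2; u3]; [:: 0; 1; u1]; [:: 0; 0; 1]] i) j.
Lemma HM_mul u1 u2 u3 u1' u2' u3' : HM u1' u2' u3' *m HM u1 u2 u3 = HM (u1' + u1) (u2' + u2) (u3 + u2' * u1 + u3').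
Proof.
apply/matrixP => i j; move: i j; apply: ord3_cases; apply: ord3_cases.
all: rewrite !mxE !big_ord_recr big_ord0 /= !mxE /=.
all: rewrite ?mul1r ?mulr1 ?mul0r ?mulr0 ?add0r ?addr0 //.
all: by rewrite addrC.
Qed.

Lemma HmatE (w : 'rV[R]_6) : Hmat w = HM (Complex (w 0 0) (w 0 1)) (Complex (w 0 2) (w 0 3)) (Complex (w 0 4) (w 0 5)).
Proof. by []. Qed.
Lemma Fmul (g' g : 'rV[R]_6) : Hmat (F (G_mul g' g)) = Hmat (F g') *m Hmat (F g).
Proof.
rewrite !HmatE HM_mul.
rewrite /F /Gmk /G_mul !mxE /=.
rewrite !cplx_mul !cplx_add.
congr HM; apply: f_equal2.
all: rewrite ?ss2 /s.
all: by field.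
Qed.


Lemma LamC (p q : R) : Lambda (Complex (p - q / 2) (q * s / 2)) <->
  exists a b : int, p = a%:~R /\ q = b%:~R.
Proof.
split.
- case=> a [b]; rewrite /zeta !cint cplx_mul cplx_add; case=> e1 e2.
  have hq : q = b%:~R.
    have : (q - b%:~R) * s = 0 by rewrite mulrBl /s in e2 *; lra.
    by move/eqP; rewrite mulf_eq0 (negbTE s_neq0) orbF subr_eq0 => /eqP.
  by exists a, b; split => //; rewrite hq in e1; lra.
- case=> a [b] [-> ->]; exists a, b; rewrite /zeta !cint cplx_mul cplx_add.
  by apply: f_equal2; rewrite /s; field.
Qed.

Lemma Hu1E (w : 'rV[R]_6) : Hu1 (Hmat w) = Complex (w 0 0) (w 0 1).
Proof. by rewrite /Hu1 /Hmat mxE. Qed.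
Lemma Hu2E (w : 'rV[R]_6) : Hu2 (Hmat w) = Complex (w 0 2) (w 0 3).
Proof. by rewrite /Hu2 /Hmat mxE. Qed.
Lemma Hu3E (w : 'rV[R]_6) : Hu3 (Hmat w) = Complex (w 0 4) (w 0 5).
Proof. by rewrite /Hu3 /Hmat mxE. Qed.

Lemma lattice (g : 'rV[R]_6) : Gamma g <-> GammaH (Hmat (F g)).
Proof.
rewrite /GammaH /= Hu1E Hu2E Hu3E /F /Gmk !mxE /= !LamC.
split.
- case=> n [hn h3]; split; first exact: HC_Hmat.
  rewrite inord4 inord5 in h3; case/dvdzP: h3 => k hk.
  rewrite !hn.
  have e : ((n 4)%:~R : R) = k%:~R * 3 + (n 5)%:~R.
    by rewrite -(subrK (n 5) (n 4)) hk intrD intrM pmulrn.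
  split; [exists (- n 2 - n 3), (- n 3)|split; [exists (n 0 + n 1), (n 1)|
     exists (k + n 5), (k + k + n 5)]];
  rewrite ?intrD ?intrB ?intrN; split => //; lra.
- case=> _ [[a1 [b1 [e1 e2]]] [[a2 [b2 [e3 e4]]] [a3 [b3 [e5 e6]]]]].
  exists [ffun k : 'I_6 => nth 0 [:: a2 - b2; b2; - a1 + b1; - b1; b3 + b3 - a3; a3 + a3 - b3] k].
  split.
    apply: ord6_cases; rewrite ffunE /= ?intrD ?intrB ?intrN; lra.
  rewrite inord4 inord5 !ffunE /=; apply/dvdzP; exists (b3 - a3); ring.
Qed.


Lemma smoothF : smooth_map (fun g => Hcoord (Hmat (F g))).
Proof.
have -> : (fun g => Hcoord (Hmat (F g))) = F by apply: funext => g; rewrite HcoordK.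
apply: smooth_of => j; rewrite /F; apply: lin_Gmk; solve_lin.
Qed.

Lemma smoothFinv : smooth_map (fun w => Finv (Hcoord (Hmat w))).
Proof.
have -> : (fun w => Finv (Hcoord (Hmat w))) = Finv by apply: funext => g; rewrite HcoordK.
apply: smooth_of => j; rewrite /Finv /=; apply: lin_Gmk; solve_lin.
Qed.

End Helpers.
Arguments F {R}.
Arguments Finv {R}.

Theorem lemma3p1 (R : realType) :
  exists (f : 'rV[R]_6 -> 'M[R[i]]_3) (finv : 'M[R[i]]_3 -> 'rV[R]_6),
    (forall g, HC (f g)) /\
    (forall g' g, f (G_mul g' g) = f g' *m f g) /\
    (forall g, finv (f g) = g) /\
    (forall M, HC M -> f (finv M) = M) /\
    smooth_map (fun g => Hcoord (f g)) /\
    smooth_map (fun w => finv (Hmat w)) /\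
    (forall g, Gamma g <-> GammaH (f g)).
Proof.
exists (fun g => Hmat (F g)), (fun M => Finv (Hcoord M)).
split; first by move=> g; apply: HC_Hmat.
split; first by move=> g' g; apply: Fmul.
split; first by move=> g; rewrite HcoordK FinvF.
split; first by move=> M HM; rewrite FFinv HmatK.
split; first exact: smoothF.
split; first exact: smoothFinv.
exact: lattice.
Qed.
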